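(* Let $G$ be a finite group, let $A$ be a subgroup of $G$, and let $W$ be a subgroup of a finitely generated group $F$ such that the subgroup $WF'$ has infinite index in $F$. Then the order $|N(A)|$ of the normaliser of $A$ in $G$ divides each of the following numbers: a) the number of homomorphisms $\varphi: F\to G$ such that the restriction of $\varphi$ to $W$ is injective and $\varphi(W)\subseteq A$; b) the number of homomorphisms $\varphi: F\to G$ such that the restriction of $\varphi$ to $W$ is injective and $\varphi(W)=A$.
   Context: $F'$ denotes the commutator subgroup of $F$; $N(A)$ is the normaliser of $A$ in $G$. *)

(* Defs.v *)
From mathcomp Require Import all_boot all_fingroup.
From Stdlib Require List. Import List.ListNotations.
Set Implicit Arguments. Unset Strict Implicit. Unset Printing Implicit Defensive.

Record Grp := {
  gcar :> Type;
  gmul : gcar -> gcar -> gcar;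
  gone : gcar;
  ginv : gcar -> gcar;
  gmulA : forall x y z, gmul x (gmul y z) = gmul (gmul x y) z;
  gmul1 : forall x, gmul gone x = x;
  gmulV : forall x, gmul (ginv x) x = gone;
  gmulr1 : forall x, gmul x gone = x;
  gmulrV : forall x, gmul x (ginv x) = gone
}.

Section GrpDefs.
Variable F : Grp.

Definition is_subgroup (H : F -> Prop) : Prop :=
  [/\ H (gone F),
      (forall x y, H x -> H y -> H (gmul x y)) &
      (forall x, H x -> H (ginv x))].

Definition generated (S : F -> Prop) : F -> Prop :=
  fun x => forall H, is_subgroup H -> (forall s, S s -> H s) -> H x.

Definition fin_generated : Prop :=
  exists gens : list F, forall x, generated (fun s => List.In s gens) x.

Definition gcomm (x y : F) : F := gmul (gmul (ginv x) (ginv y)) (gmul x y).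

Definition derived : F -> Prop :=
  generated (fun c => exists x y, c = gcomm x y).

Definition prod_set (H K : F -> Prop) : F -> Prop :=
  fun x => exists h k, [/\ H h, K k & x = gmul h k].

Definition finite_index (H : F -> Prop) : Prop :=
  exists l : list F, forall x, exists2 g, List.In g l & H (gmul (ginv g) x).

End GrpDefs.

(* homomorphisms F -> G, viewed as maps into the ambient finGroupType *)
Definition is_hom (F : Grp) (gT : finGroupType) (G : {set gT}) (phi : F -> gT) : Prop :=
  (forall x, phi x \in G) /\ (forall x y, phi (gmul x y) = (phi x * phi y)%g).

Definition card_eq (X Y : Type) (P : (X -> Y) -> Prop) (n : nat) : Prop :=
  exists l : list (X -> Y), [/\ List.length l = n, List.NoDup l & forall f, P f <-> List.In f l].

(* Main.v *)
Require Import Defs.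
From mathcomp Require Import all_boot all_fingroup.
From Stdlib Require List. Import List.ListNotations.
From mathcomp Require Import ssralg ssrnum ssrint intdiv zify.
From mathcomp Require Import cyclic.
From Stdlib Require Import Classical ClassicalEpsilon FunctionalExtensionality.
Set Implicit Arguments. Unset Strict Implicit. Unset Printing Implicit Defensive.

Section AbsGroup.
Variable F : Grp.
Local Notation "x ** y" := (gmul x y) (at level 40, left associativity).
Local Notation ge := (gone F).

Lemma gmulI (x y z : F) : x ** y = x ** z -> y = z.
Proof.
by move=> h; rewrite -(gmul1 y) -(gmulV x) -gmulA h gmulA gmulV gmul1.
Qed.

Lemma gmulIr (x y z : F) : y ** x = z ** x -> y = z.
Proof.
by move=> h; rewrite -(gmulr1 y) -(gmulrV x) gmulA h -gmulA gmulrV gmulr1.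
Qed.

Lemma ginvK (x : F) : ginv (ginv x) = x.
Proof. by apply: (@gmulIr (ginv x)); rewrite gmulV gmulrV. Qed.

Lemma ginv_mul (x y : F) : ginv (x ** y) = ginv y ** ginv x.
Proof.
apply: (@gmulIr (x ** y)); rewrite gmulV -gmulA (gmulA (ginv x)) gmulV gmul1.
by rewrite gmulV.
Qed.

Lemma ginv1 : ginv ge = ge.
Proof. by rewrite -{2}(gmulV ge) gmulr1. Qed.

Lemma ginv_uniq (x y : F) : x ** y = ge -> ginv x = y.
Proof. by move=> h; apply: (@gmulI x); rewrite gmulrV h. Qed.

Lemma gmulKV (x y : F) : ginv x ** (x ** y) = y.
Proof. by rewrite gmulA gmulV gmul1. Qed.
Lemma gmulVK (x y : F) : x ** (ginv x ** y) = y.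
Proof. by rewrite gmulA gmulrV gmul1. Qed.
Lemma gmulrK (x y : F) : y ** x ** ginv x = y.
Proof. by rewrite -gmulA gmulrV gmulr1. Qed.
Lemma gmulrVK (x y : F) : y ** ginv x ** x = y.
Proof. by rewrite -gmulA gmulV gmulr1. Qed.

Fixpoint gpow (x : F) (n : nat) : F :=
  match n with 0 => ge | n'.+1 => x ** gpow x n' end.

Lemma gpowD x m n : gpow x (m + n) = gpow x m ** gpow x n.
Proof. by elim: m => [|m IH] /=; rewrite ?gmul1 // IH gmulA. Qed.

Lemma gpowSr x n : gpow x n.+1 = gpow x n ** x.
Proof. by rewrite -addn1 gpowD /= gmulr1. Qed.

Lemma gpowV x n : ginv (gpow x n) = gpow (ginv x) n.
Proof.
elim: n => [|n IH] /=; first exact: ginv1.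
by rewrite ginv_mul IH -gpowSr.
Qed.

Lemma gpowM x m n : gpow x (m * n) = gpow (gpow x m) n.
Proof. by elim: n => [|n IH]; rewrite ?muln0 // mulnS gpowD IH. Qed.

Definition zpow (x : F) (z : int) : F :=
  match z with Posz n => gpow x n | Negz n => gpow (ginv x) n.+1 end.

Lemma zpowS x z : zpow x (z + 1)%R = zpow x z ** x.
Proof.
case: z => [n|n] /=.
  by rewrite addn1 gpowSr.
case: n => [|n] /=.
  by rewrite gmulr1 gmulV.
rewrite subn1 /=; have h := gpowSr (ginv x) n; rewrite /= in h.
by rewrite h gmulA gmulrVK -h.
Qed.

Lemma zpowP x z : zpow x (z - 1)%R = zpow x z ** ginv x.
Proof.
by rewrite -{2}[z](GRing.subrK 1%R) zpowS gmulrK.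
Qed.

Lemma PoszS (n : nat) : Posz n.+1 = (Posz n + 1)%R.
Proof. by rewrite -addn1 PoszD. Qed.
Lemma NegzS (n : nat) : Negz n.+1 = (Negz n - 1)%R.
Proof. by rewrite !NegzE -addn1 PoszD GRing.opprD. Qed.
Lemma Negz0 : Negz 0 = (0 - 1)%R.
Proof. by []. Qed.

Lemma zpowD x z w : zpow x (z + w)%R = zpow x z ** zpow x w.
Proof.
case: w => n.
  elim: n => [|n IH]; first by rewrite GRing.addr0 /= gmulr1.
  rewrite PoszS GRing.addrA !zpowS IH gmulA //.
elim: n => [|n IH].
  by rewrite Negz0 GRing.addrA GRing.addr0 zpowP /= gmulr1.
rewrite NegzS GRing.addrA !zpowP IH gmulA //.
Qed.

Lemma zpow0 x : zpow x 0 = ge. Proof. by []. Qed.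
Lemma zpow1 x : zpow x 1 = x. Proof. by rewrite /= gmulr1. Qed.

Lemma zpowN x z : zpow x (- z)%R = ginv (zpow x z).
Proof.
symmetry; apply: ginv_uniq; rewrite -zpowD GRing.subrr //.
Qed.

Lemma zpowMn x z (n : nat) : zpow x (z * n%:Z)%R = gpow (zpow x z) n.
Proof.
elim: n => [|n IH]; first by rewrite GRing.mulr0.
by rewrite PoszS GRing.mulrDr GRing.mulr1 zpowD IH gpowSr.
Qed.

End AbsGroup.

Section ZpowMul.
Variable F : Grp.
Lemma zpow_mul (x : F) (w z : int) : zpow x (w * z)%R = zpow (zpow x w) z.
Proof.
case: z => n; first exact: (zpowMn x w n).
have -> : (w * Negz n)%R = (- (w * n.+1%:Z))%R by rewrite NegzE GRing.mulrN.
by rewrite zpowN zpowMn gpowV.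
Qed.
End ZpowMul.

Definition cb (P : Prop) : bool :=
  if excluded_middle_informative P then true else false.
Lemma cbP (P : Prop) : reflect P (cb P).
Proof. by rewrite /cb; case: excluded_middle_informative => h; constructor. Qed.

Section Sub.
Variable F : Grp.
Local Notation "x ** y" := (gmul x y) (at level 40, left associativity).
Local Notation ge := (gone F).

Lemma sub1 (H : F -> Prop) : is_subgroup H -> H ge.
Proof. by case. Qed.
Lemma subM (H : F -> Prop) x y : is_subgroup H -> H x -> H y -> H (x ** y).
Proof. by case=> _ h _; apply: h. Qed.
Lemma subV (H : F -> Prop) x : is_subgroup H -> H x -> H (ginv x).
Proof. by case=> _ _ h; apply: h. Qed.
Lemma subVr (H : F -> Prop) x : is_subgroup H -> H (ginv x) -> H x.
Proof. by move=> sH /(subV sH); rewrite ginvK. Qed.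

Lemma sub_gpow (H : F -> Prop) x n : is_subgroup H -> H x -> H (gpow x n).
Proof. move=> sH Hx; elim: n => [|n IH] /=; [exact: sub1 | exact: subM]. Qed.
Lemma sub_zpow (H : F -> Prop) x z : is_subgroup H -> H x -> H (zpow x z).
Proof. by move=> sH Hx; case: z => n /=; [exact: sub_gpow | exact: (@sub_gpow H (ginv x) n.+1 sH (subV sH Hx))]. Qed.

Lemma gen_sub (S : F -> Prop) : is_subgroup (Defs.generated S).
Proof.
split.
- by move=> H sH _; apply: sub1.
- by move=> x y hx hy H sH hS; apply: subM => //; [apply: hx | apply: hy].
- by move=> x hx H sH hS; apply: subV => //; apply: hx.
Qed.
Lemma gen_incl (S : F -> Prop) x : S x -> Defs.generated S x.
Proof. by move=> hx H sH hS; apply: hS. Qed.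
Lemma gen_min (S H : F -> Prop) x : is_subgroup H -> (forall s, S s -> H s) ->
  Defs.generated S x -> H x.
Proof. by move=> sH hS hx; apply: hx. Qed.

Lemma conj_comm (x g : F) : ginv g ** x ** g = x ** gcomm x g.
Proof. by rewrite /gcomm !gmulA gmulrV gmul1. Qed.

Lemma sub_normal (N : F -> Prop) x g : is_subgroup N ->
  (forall x y, N (gcomm x y)) -> N x -> N (ginv g ** x ** g).
Proof. by move=> sN hc hx; rewrite conj_comm; apply: subM. Qed.

Lemma derived_sub : is_subgroup (@derived F).
Proof. exact: gen_sub. Qed.
Lemma derived_comm x y : @derived F (gcomm x y).
Proof. by apply: gen_incl; exists x, y. Qed.

Lemma prodWD_sub (W : F -> Prop) : is_subgroup W -> is_subgroup (prod_set W (@derived F)).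
Proof.
move=> sW; have sD := @derived_sub.
split.
- by exists ge, ge; split; rewrite ?gmulr1 //; apply: sub1.
- move=> x y [w1 [d1 [Hw1 Hd1 ->]]] [w2 [d2 [Hw2 Hd2 ->]]].
  exists (w1 ** w2), (ginv w2 ** d1 ** w2 ** d2); split.
  + exact: subM.
  + by apply: (@subM (@derived F)) => //; apply: (sub_normal w2 (sD) (@derived_comm) Hd1).
  + by rewrite !gmulA gmulrK.
- move=> x [w [d [Hw Hd ->]]].
  exists (ginv w), (ginv (ginv w) ** ginv d ** ginv w); split.
  + exact: subV.
  + by apply: (sub_normal (ginv w) (sD) (@derived_comm)); apply: (@subV (@derived F)).

  + by rewrite ginvK ginv_mul !gmulA gmulV gmul1.
Qed.

Lemma prodWD_comm (W : F -> Prop) x y : is_subgroup W -> prod_set W (@derived F) (gcomm x y).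
Proof. by move=> sW; exists ge, (gcomm x y); split; rewrite ?gmul1 //; [apply: sub1 | apply: derived_comm]. Qed.

End Sub.

Section Quot.
Variable F : Grp.
Local Notation "x ** y" := (gmul x y) (at level 40, left associativity).
Local Notation ge := (gone F).
Variable H : F -> Prop.
Hypothesis sH : is_subgroup H.
Hypothesis cH : forall x y, H (gcomm x y).

Definition fin_in (S : F -> Prop) :=
  exists l : list F, forall x, S x -> exists2 g, List.In g l & H (ginv g ** x).
Definition hom_on (S : F -> Prop) (t : F -> int) :=
  forall x y, S x -> S y -> t (x ** y) = (t x + t y)%R.
Definition goodZ (S : F -> Prop) :=
  exists t u, [/\ hom_on S t, (forall h, H h -> t h = 0), S u & t u = 1].

Section HomOn.
Variables (S : F -> Prop) (t : F -> int).
Hypothesis sS : is_subgroup S.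
Hypothesis ht : hom_on S t.

Lemma t1 : t ge = 0.
Proof. have := ht (sub1 sS) (sub1 sS); rewrite gmul1; lia. Qed.
Lemma tV x : S x -> t (ginv x) = (- t x)%R.
Proof. move=> Sx; have := ht (subV sS Sx) Sx; rewrite gmulV t1; lia. Qed.
Lemma tgpow x n : S x -> t (gpow x n) = ((Posz n) * t x)%R.
Proof.
move=> Sx; elim: n => [|n IH] /=; first by rewrite t1 GRing.mul0r.
rewrite ht //; last exact: sub_gpow. rewrite IH; lia.
Qed.
Lemma tzpow x z : S x -> t (zpow x z) = (z * t x)%R.
Proof.
move=> Sx; case: z => n; first exact: tgpow.
change (t (gpow (ginv x) n.+1) = (Negz n * t x)%R).
rewrite tgpow; last exact: subV. rewrite tV // NegzE; lia.
Qed.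
End HomOn.

Lemma transport (S1 S2 : F -> Prop) : (forall x, S1 x <-> S2 x) ->
  fin_in S1 \/ goodZ S1 -> fin_in S2 \/ goodZ S2.
Proof.
move=> e [[l hl]|[t [u [h1 h2 h3 h4]]]].
  by left; exists l => x /e; apply: hl.
right; exists t, u; split => //; last by apply/e.
by move=> x y /e Sx /e Sy; apply: h1.
Qed.

Lemma normalize (S : F -> Prop) (t : F -> int) v : is_subgroup S -> hom_on S t ->
  (forall h, H h -> t h = 0) -> S v -> t v != 0 -> goodZ S.
Proof.
move=> sS ht tH Sv tv.
pose P n := cb (0 < n /\ exists x, S x /\ t x = (Posz n)).
have exP : exists n, P n.
  exists (absz (t v)); apply/cbP; split; first lia.
  have [pos|neg] := boolP (0 <= t v)%R.
    by exists v; split=> //; lia.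
  exists (ginv v); split; first exact: subV.
  rewrite (tV sS ht Sv); lia.
case: (ex_minnP exP) => d /cbP [d0 [x0 [Sx0 tx0]]] dmin.
have dvd : forall x, S x -> t x = ((t x %/ d)%Z * (Posz d))%R.
  move=> x Sx; set q := (t x %/ d)%Z.
  have y0 : S (x ** zpow x0 (- q)).
    by apply: subM => //; apply: sub_zpow.
  have ty : t (x ** zpow x0 (- q)) = (t x %% d)%Z.
    rewrite ht //; last exact: sub_zpow.
    rewrite (tzpow sS ht) // tx0 {1}(divz_eq (t x) d) -/q; lia.
  case: (posnP (absz (t x %% d)%Z)) => [h0|hpos].
    rewrite {1}(divz_eq (t x) d) -/q; lia.
  have := dmin (absz (t x %% d)%Z); rewrite -/(P _).
  have -> : P (absz (t x %% d)%Z).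
    apply/cbP; split => //; exists (x ** zpow x0 (- q)); split=> //.
    rewrite ty; lia.
  move=> /(_ isT); lia.
exists (fun x => (t x %/ d)%Z), x0; split.
- move=> x y Sx Sy; rewrite ht // {1}(dvd x Sx) {1}(dvd y Sy) -GRing.mulrDl mulzK //.
  lia.
- by move=> h Hh; rewrite tH // div0z.
- done.
- rewrite tx0 divzz; have -> : (Posz d != 0%R) = true by apply/eqP; lia. done.
Qed.

Section Step.
Variable S' : F -> Prop.
Hypothesis sS' : is_subgroup S'.
Hypothesis HS' : forall h, H h -> S' h.
Variable a : F.
Let S := Defs.generated (fun y => S' y \/ y = a).

Let sS : is_subgroup S. Proof. exact: gen_sub. Qed.
Let cS' : forall x y, S' (gcomm x y). Proof. by move=> x y; apply: HS'. Qed.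
Let nS' x g : S' x -> S' (ginv g ** x ** g). Proof. exact: sub_normal. Qed.
Let S'S x : S' x -> S x. Proof. by move=> h; apply: gen_incl; left. Qed.
Let Sa : S a. Proof. by apply: gen_incl; right. Qed.

Lemma dec_mul s s' z w : s ** zpow a z ** (s' ** zpow a w) =
  s ** (s' ** gcomm s' (zpow a (- z))) ** zpow a (z + w).
Proof.
rewrite -conj_comm zpowN ginvK zpowD !gmulA.
by rewrite gmulrVK.
Qed.

Lemma dec_inv s z : ginv (s ** zpow a z) =
  (ginv (zpow a z) ** ginv s ** zpow a z) ** zpow a (- z).
Proof. by rewrite zpowN ginv_mul gmulrK. Qed.

Definition Rep x := exists s z, S' s /\ x = s ** zpow a z.

Lemma rep_all x : S x -> Rep x.
Proof.
apply: gen_min.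
- split.
  + by exists ge, 0; split; rewrite ?gmulr1 //; apply: sub1.
  + move=> x1 y1 [s [z [Ss ->]]] [s' [w [Ss' ->]]].
    exists (s ** (s' ** gcomm s' (zpow a (- z)))), (z + w)%R; split; last exact: dec_mul.
    by apply: subM => //; apply: subM.
  + move=> x1 [s [z [Ss ->]]].
    exists (ginv (zpow a z) ** ginv s ** zpow a z), (- z)%R; split; last exact: dec_inv.
    by apply: nS'; apply: subV.
- move=> y [Sy| ->].
    by exists y, 0; split; rewrite ?gmulr1.
  by exists ge, 1; split; [apply: sub1 | rewrite gmul1 zpow1].
Qed.

Section NoPow.
Hypothesis np : forall m, 0 < m -> ~ S' (gpow a m).

Lemma zpow_in z : S' (zpow a z) -> z = 0.
Proof.
case: z => [[|m]|m] //= h.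
  by case: (np (m:=m.+1)).
case: (np (m:=m.+1)) => //; apply: subVr => //; rewrite gpowV //.
Qed.

Lemma rep_uniq s s' z w : S' s -> S' s' -> s ** zpow a z = s' ** zpow a w -> z = w.
Proof.
move=> Ss Ss' e.
have : S' (zpow a (z - w)%R).
  rewrite zpowD zpowN.
  have -> : zpow a z ** ginv (zpow a w) = ginv s ** s'.
    by rewrite -{1}(gmulKV s (zpow a z)) e -!gmulA gmulrV gmulr1.
  by apply: subM => //; apply: subV.
by move/zpow_in => h; lia.
Qed.

Definition tN x := epsilon (inhabits (0 : int)) (fun z => exists s, S' s /\ x = s ** zpow a z).

Lemma tNE s z : S' s -> tN (s ** zpow a z) = z.
Proof.
move=> Ss; rewrite /tN.
case: (epsilon_spec (inhabits (0:int)) (fun z0 => exists s0, S' s0 /\ s ** zpow a z = s0 ** zpow a z0)).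
  by exists z, s.
move=> s0 [Ss0 e]; symmetry; exact: rep_uniq e.
Qed.

Lemma noPow_good : goodZ S.
Proof.
exists tN, a; split.
- move=> x y /rep_all [s [z [Ss ->]]] /rep_all [s' [w [Ss' ->]]].
  rewrite dec_mul !tNE //; apply: subM => //; exact: subM.
- move=> h Hh; have -> : h = h ** zpow a 0 by rewrite /= gmulr1.
  by rewrite tNE //; apply: HS'.
- done.
- have -> : a = ge ** zpow a 1 by rewrite gmul1 zpow1.
  by rewrite tNE //; apply: sub1.
Qed.
End NoPow.

Section Pow.
Variable m : nat.
Hypothesis m0 : 0 < m.
Hypothesis Sam : S' (gpow a m).

Lemma A1 : fin_in S' -> fin_in S.
Proof.
move=> [l hl].
exists (List.flat_map (fun g => List.map (fun i => g ** gpow a i) (List.seq 0 m)) l).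
move=> x /rep_all [s [z [Ss ->]]].
set q := (z %/ m)%Z; set r := absz (z %% m)%Z.
have zE : z = (q * (Posz m) + (Posz r))%R.
  rewrite /r gez0_abs; first exact: divz_eq.
  by apply: modz_ge0; lia.
have Sq : S' (zpow a (q * (Posz m))%R).
  rewrite GRing.mulrC zpow_mul; apply: sub_zpow => //.
have s1 : S' (s ** zpow a (q * (Posz m))%R) by apply: subM.
have [g gl hg] := hl _ s1.
exists (g ** gpow a r).
  apply/List.in_flat_map; exists g; split=> //.
  apply/List.in_map_iff; exists r; split=> //; apply/List.in_seq.
  split; first lia. rewrite /r; apply/ltP; lia.
rewrite zE zpowD gmulA.
have -> : zpow a ((Posz r)) = gpow a r by [].
have := sub_normal (gpow a r) sH cH hg.
by rewrite ginv_mul !gmulA.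
Qed.

Lemma B1 : goodZ S' -> goodZ S.
Proof.
move=> [t1 [u1 [ht1 tH1 Su1 tu1]]].
set T := t1 (gpow a m).
pose p x := epsilon (inhabits (ge, 0 : int)) (fun p => S' p.1 /\ x = p.1 ** zpow a p.2).
pose t x := ((Posz m) * t1 (p x).1 + (p x).2 * T)%R.
have key : forall s s' z w, S' s -> S' s' -> s ** zpow a z = s' ** zpow a w ->
    ((Posz m) * t1 s + z * T = (Posz m) * t1 s' + w * T)%R.
  move=> s s' z w Ss Ss' e.
  have e2 : zpow a (z - w)%R = ginv s ** s'.
    rewrite zpowD zpowN.
    by rewrite -{1}(gmulKV s (zpow a z)) e -!gmulA gmulrV gmulr1.
  have Sd : S' (zpow a (z - w)%R) by rewrite e2; apply: subM => //; apply: subV.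
  have h1 : t1 (zpow a (z - w)%R) = (t1 s' - t1 s)%R.
    by rewrite e2 ht1 ?(tV sS' ht1) //; [lia | apply: subV].
  have h2 : ((Posz m) * t1 (zpow a (z - w)%R))%R = ((z - w) * T)%R.
    rewrite -(tgpow sS' ht1) // -zpowMn GRing.mulrC zpow_mul.
    by rewrite (tzpow sS' ht1).
  move: h2; rewrite h1; lia.
have tE : forall s z, S' s -> t (s ** zpow a z) = ((Posz m) * t1 s + z * T)%R.
  move=> s z Ss; rewrite /t /p.
  case: (epsilon_spec (inhabits (ge, 0:int)) (fun p0 => S' p0.1 /\ s ** zpow a z = p0.1 ** zpow a p0.2)).
    by exists (s, z).
  by move=> Sp e; symmetry; apply: key e.
apply: (@normalize S t u1) => //.
- move=> x y /rep_all [s [z [Ss ->]]] /rep_all [s' [w [Ss' ->]]].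
  have Sc : S' (gcomm s' (zpow a (- z))) by [].
  rewrite dec_mul !tE //; last by apply: subM => //; exact: subM.
  rewrite ht1 //; last exact: subM.
  rewrite ht1 // (tH1 _ (cH s' (zpow a (- z)))); lia.
- move=> h Hh; have -> : h = h ** zpow a 0 by rewrite /= gmulr1.
  by rewrite tE ?tH1 //; [lia | apply: HS'].
- exact: S'S.
- have -> : u1 = u1 ** zpow a 0 by rewrite /= gmulr1.
  rewrite tE // tu1; lia.
Qed.
End Pow.

Lemma step : fin_in S' \/ goodZ S' -> fin_in S \/ goodZ S.
Proof.
move=> IH.
case: (classic (exists m, 0 < m /\ S' (gpow a m))) => [[m [m0 Sam]]|np].
  by case: IH => h; [left; exact: (A1 m0 Sam h) | right; exact: (B1 m0 Sam h)].
right; apply: noPow_good => m m0 h; apply: np; exists m; by split.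
Qed.
End Step.

Definition Sgen (l : list F) := Defs.generated (fun y => H y \/ List.In y l).

Lemma quot_all (l : list F) : fin_in (Sgen l) \/ goodZ (Sgen l).
Proof.
elim: l => [|a l IH].
  left; exists (ge :: nil) => x Sx; exists ge; first by left.
  rewrite ginv1 gmul1; apply: gen_min Sx => //.
  by move=> s [//|[]].
have sSl : is_subgroup (Sgen l) by apply: gen_sub.
apply: (@transport (Defs.generated (fun y => Sgen l y \/ y = a))).
  move=> x; split; apply: gen_min; try apply: gen_sub.
  - move=> y [Sy| ->]; last by apply: gen_incl; right; left.
    apply: gen_min Sy; first exact: gen_sub.
    by move=> s [Hs|ls]; apply: gen_incl; [left | right; right].
  - move=> y [Hy|[<-|ly]]; apply: gen_incl; [left | right | left].
    + by apply: gen_incl; left.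
    + done.
    + by apply: gen_incl; right.
apply: step => //.
by move=> h Hh; apply: gen_incl; left.
Qed.

End Quot.

Lemma exists_t (F : Grp) (W : F -> Prop) : is_subgroup W -> @fin_generated F ->
  ~ finite_index (prod_set W (@derived F)) ->
  exists (t : F -> int) (u : F), [/\ (forall x y, t (gmul x y) = (t x + t y)%R),
     (forall w, W w -> t w = 0) & t u = 1].
Proof.
move=> sW [gens hgens] nfi.
set H := prod_set W (@derived F).
have sH : is_subgroup H by apply: prodWD_sub.
have cH : forall x y, H (gcomm x y) by move=> x y; apply: prodWD_comm.
have all : forall x, Sgen H gens x.
  move=> x; apply: gen_min (hgens x); first exact: gen_sub.
  by move=> s ls; apply: gen_incl; right.
case: (quot_all sH cH gens) => [[l hl]|[t [u [ht tH _ tu]]]].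
  by case: nfi; exists l => x; apply: hl.
exists t, u; split => //.
- by move=> x y; apply: ht.
- move=> w Ww; apply: tH; exists w, (gone F); split => //; last by rewrite gmulr1.
  by apply: sub1; apply: derived_sub.
Qed.

Section OrbitSum.
Local Open Scope group_scope.

Lemma orbit_sum_dvd (aT : finGroupType) (rT : finType) (to : {action aT &-> rT})
  (N : {group aT}) (Psi : {set rT}) (f : rT -> nat) :
  [acts N, on Psi | to] -> (forall x a, a \in N -> f (to x a) = f x) ->
  (forall x, x \in Psi -> (#|'C_N[x | to]| %| f x)%N) ->
  (#|N| %| \sum_(x in Psi) f x)%N.
Proof.
move=> actsN finv fdvd.
rewrite (partition_big_imset (orbit to N)) /=.
apply: dvdn_sum => O /imsetP [x0 Px0 ->].
have -> : \sum_(i in Psi | orbit to N i == orbit to N x0) f i =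
          \sum_(i in orbit to N x0) f x0.
  apply: eq_big => y.
    apply/idP/idP.
      by case/andP=> _ /eqP e; rewrite -e orbit_refl.
    move=> yO; have /orbit_eqP e := yO.
    rewrite e eqxx andbT.
    by case/orbitP: yO => a Na <-; rewrite (acts_act actsN).
  case/andP=> _ /eqP e; have : y \in orbit to N x0 by rewrite -e orbit_refl.
  by case/orbitP => a Na <-; apply: finv.
rewrite sum_nat_const.
have := card_orbit_in_stab to x0 (subsetT N).
have [k ->] := dvdnP (fdvd x0 Px0) => e.
by rewrite mulnCA e dvdn_mull.
Qed.

End OrbitSum.

Open Scope group_scope.

Section Hom.
Variables (gT : finGroupType) (G : {group gT}) (F : Grp).
Local Notation "x ** y" := (gmul x y) (at level 40, left associativity).
Local Notation ge := (gone F).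

Variable phi : F -> gT.
Hypothesis hphi : is_hom G phi.

Lemma phiG x : phi x \in G. Proof. by case: hphi. Qed.
Lemma phiM x y : phi (x ** y) = (phi x * phi y)%g. Proof. by case: hphi. Qed.
Lemma phi1 : phi ge = 1%g.
Proof. have h := phiM ge ge; rewrite gmul1 in h. by apply: (mulgI (phi ge)); rewrite mulg1 -h. Qed.
Lemma phiV x : phi (ginv x) = (phi x)^-1%g.
Proof. by apply/eqP; rewrite eq_sym eq_invg_mul -phiM gmulrV phi1. Qed.
Lemma phi_gpow x n : phi (gpow x n) = (phi x ^+ n)%g.
Proof. by elim: n => [|n IH] /=; rewrite ?phi1 // phiM IH expgS. Qed.
End Hom.

Section YPow.
Variables (gT : finGroupType) (M : nat).
Hypothesis M0 : 0 < M.
Definition ypow (y : gT) (z : int) := (y ^+ absz (z %% (Posz M))%Z)%g.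

Variable y : gT.
Hypothesis yM : (y ^+ M = 1)%g.

Lemma ypowD z w : ypow y (z + w)%R = (ypow y z * ypow y w)%g.
Proof.
rewrite /ypow -expgD -(expg_mod _ yM) -[in RHS](expg_mod _ yM).
congr (_ ^+ _)%g.
rewrite -modzDm.
have M0' : (Posz M != 0)%R by apply/eqP; lia.
have [a ea] : exists a : nat, (z %% M)%Z = Posz a.
  by exists (absz (z %% M)%Z); rewrite gez0_abs // modz_ge0.
have [b eb] : exists b : nat, (w %% M)%Z = Posz b.
  by exists (absz (w %% M)%Z); rewrite gez0_abs // modz_ge0.
by rewrite ea eb -PoszD modz_nat /= modn_mod.
Qed.
End YPow.

Section YPow2.
Variables (gT : finGroupType) (M : nat).
Hypothesis M0 : 0 < M.
Variable y : gT.
Hypothesis yM : (y ^+ M = 1)%g.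

Lemma ypow_nat (n : nat) : ypow M y (Posz n) = (y ^+ n)%g.
Proof. by rewrite /ypow modz_nat /= (expg_mod _ yM). Qed.

Lemma ypow0 : ypow M y 0 = 1%g.
Proof. by rewrite ypow_nat. Qed.

Lemma ypowN z : ypow M y (- z)%R = (ypow M y z)^-1%g.
Proof.
apply/eqP; rewrite eq_sym eq_invg_mul -ypowD // GRing.subrr ypow0 //.
Qed.

Variables (F : Grp) (G : {group gT}) (phi : F -> gT) (x : F).
Hypothesis hphi : is_hom G phi.
Hypothesis px : phi x = y.

Lemma phi_zpow z : phi (zpow x z) = ypow M y z.
Proof.
case: z => n.
  have -> : zpow x (Posz n) = gpow x n by [].
  by rewrite (phi_gpow hphi) px ypow_nat.
have -> : Negz n = (- Posz n.+1)%R by rewrite NegzE.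
rewrite zpowN.
have -> : zpow x (Posz n.+1) = gpow x n.+1 by [].
by rewrite (phiV hphi) (phi_gpow hphi) px ypowN // ypow_nat.
Qed.
End YPow2.

Lemma In_mem (T : eqType) (x : T) (s : seq T) : List.In x s <-> x \in s.
Proof.
elim: s => [|y s IH] //=; rewrite in_cons; split.
  by case=> [->|/IH ->]; rewrite ?eqxx ?orbT.
by case/orP=> [/eqP ->|/IH]; [left | right].
Qed.

Lemma length_size (T : Type) (s : seq T) : List.length s = size s.
Proof. by elim: s => //= x s ->. Qed.

Lemma NoDup_map_in (A : eqType) (B : Type) (f : A -> B) (s : seq A) :
  uniq s -> {in s &, injective f} -> List.NoDup (List.map f s).
Proof.
elim: s => [|a s IH] /=; first by constructor.
case/andP=> nas us inj; constructor.
  move/List.in_map_iff=> [x [fx /In_mem xs]].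
  have ex : x = a by apply: inj; rewrite ?in_cons ?xs ?eqxx ?orbT.
  by move: nas; rewrite -ex xs.
apply: IH => // x y xs ys fxy; apply: inj fxy.
  by rewrite in_cons xs orbT.
by rewrite in_cons ys orbT.
Qed.

Section Count.
Variables (gT : finGroupType) (G N : {group gT}) (F : Grp) (gens : list F).
Variables (t : F -> int) (u : F).
Local Notation "x ** y" := (gmul x y) (at level 40, left associativity).
Local Notation ge := (gone F).
Hypothesis sNG : N \subset G.
Hypothesis hgens : forall x, Defs.generated (fun s => List.In s gens) x.
Hypothesis ht : forall x y, t (x ** y) = (t x + t y)%R.
Hypothesis tu : t u = 1%R.
Variable Q : (F -> gT) -> Prop.
Hypothesis HQhom : forall phi, Q phi -> is_hom G phi.
Hypothesis HQconj : forall phi a, Q phi -> a \in N -> Q (fun x => phi x ^ a)%g.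
Hypothesis HQloc : forall phi phi', Q phi -> is_hom G phi' ->
  (forall x, t x = 0%R -> phi x = phi' x) -> Q phi'.

Let M := (#|G| * 2)%N.
Let M0 : 0 < M. Proof. rewrite /M; have := cardG_gt0 G; lia. Qed.
Let M1 : 1 < M. Proof. rewrite /M; have := cardG_gt0 G; lia. Qed.
Let Mpow g : g \in G -> (g ^+ M = 1)%g.
Proof. by move=> Gg; rewrite /M expgM expg_cardG // expg1n. Qed.

Let sT : is_subgroup (fun _ : F => True). Proof. by []. Qed.
Let htT : hom_on (fun _ => True) t. Proof. by move=> x y _ _; apply: ht. Qed.
Let tzu z : t (zpow u z) = z.
Proof. by rewrite (tzpow sT htT) // tu GRing.mulr1. Qed.

Definition kpart x := x ** zpow u (- t x)%R.
Lemma tk x : t (kpart x) = 0%R.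
Proof. by rewrite /kpart ht tzu GRing.subrr. Qed.
Lemma ksplit x : x = kpart x ** zpow u (t x).
Proof. by rewrite /kpart -gmulA -zpowD GRing.addNr zpow0 gmulr1. Qed.

Lemma phi_split phi x : is_hom G phi ->
  phi x = (phi (kpart x) * ypow M (phi u) (t x))%g.
Proof.
move=> hp; rewrite {1}(ksplit x) (phiM hp).
by rewrite (phi_zpow M0 (Mpow (phiG hp u)) hp (erefl _)).
Qed.

Let n := size gens.
Definition code (phi : F -> gT) : {ffun 'I_n -> gT} :=
  [ffun i : 'I_n => phi (List.nth i gens ge)].

Lemma hom_uniq f1 f2 : is_hom G f1 -> is_hom G f2 ->
  code f1 = code f2 -> f1 = f2.
Proof.
move=> h1 h2 ec; apply: functional_extensionality => x.
apply: (gen_min (S := fun s => List.In s gens) (H := fun x => f1 x = f2 x)) (hgens x).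
- split.
  + by rewrite (phi1 h1) (phi1 h2).
  + by move=> a b ea eb; rewrite (phiM h1) (phiM h2) ea eb.
  + by move=> a ea; rewrite (phiV h1) (phiV h2) ea.
- move=> s ls; have [i [ilt <-]] := List.In_nth gens s ge ls.
  have ilt' : i < n by rewrite /n -length_size; apply/ltP.
  have := congr1 (fun f : {ffun 'I_n -> gT} => f (Ordinal ilt')) ec.
  by rewrite !ffunE.
Qed.

Definition imK (phi : F -> gT) : {set gT} :=
  [set y | cb (exists x, t x = 0%R /\ phi x = y)].

Lemma imKP phi y : reflect (exists x, t x = 0%R /\ phi x = y) (y \in imK phi).
Proof. by rewrite inE; apply: cbP. Qed.

Section Phic.
Variable phi0 : F -> gT.
Hypothesis h0 : is_hom G phi0.
Let g0 := phi0 u.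
Let Gg0 : g0 \in G. Proof. exact: phiG. Qed.

Lemma imK_conj y : y \in imK phi0 -> (g0 * y * g0^-1)%g \in imK phi0.
Proof.
case/imKP=> k [tk0 <-]; apply/imKP; exists (u ** k ** ginv u); split.
  by rewrite !ht (tV sT htT) // tk0 tu; lia.
by rewrite !(phiM h0) (phiV h0).
Qed.

Variable c : gT.
Hypothesis Cc : c \in 'C_G(imK phi0).
Let Gc : c \in G. Proof. by case/setIP: Cc. Qed.
Let cc : c \in 'C(imK phi0). Proof. by case/setIP: Cc. Qed.

Lemma conj_pow m y : y \in imK phi0 ->
  (g0 ^+ m * y * (g0 ^+ m)^-1 = (g0 * c) ^+ m * y * ((g0 * c) ^+ m)^-1)%g.
Proof.
elim: m y => [|m IH] y Ky; first by rewrite !expg0 invg1 mul1g mulg1.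
have e1 : (g0 * y * g0^-1 = (g0 * c) * y * (g0 * c)^-1)%g.
  have cy : commute c y by move/centP: cc => /(_ y Ky).
  by rewrite invMg !mulgA -(mulgA g0 c y) cy mulgA mulgK.
rewrite !expgSr !invMg.
move: (IH _ (imK_conj Ky)); rewrite [in X in _ = X]e1 !mulgA => ->.
by rewrite invMg !mulgA.
Qed.

Definition phic := fun x => (phi0 (kpart x) * ypow M (g0 * c) (t x))%g.

Let Gg0c : (g0 * c)%g \in G. Proof. by rewrite groupM. Qed.

Lemma phic_hom : is_hom G phic.
Proof.
split.
  move=> x; rewrite /phic groupM ?(phiG h0) //.
  by rewrite /ypow groupX.
move=> x y; rewrite /phic.
set Z := zpow u (t x).
have ek : kpart (x ** y) = kpart x ** (Z ** kpart y ** ginv Z).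
  rewrite /kpart /Z -zpowN ht GRing.opprD GRing.addrC zpowD.
  have hAB : zpow u (- t x)%R ** zpow u (t x) = ge by rewrite -zpowD GRing.addNr.
  by rewrite !gmulA -(gmulA x (zpow u (- t x)%R)) hAB gmulr1.
have Ky : phi0 (kpart y) \in imK phi0 by apply/imKP; exists (kpart y); rewrite tk.
rewrite ek; move: (kpart x) (kpart y) Ky => kx ky Ky.
rewrite !(phiM h0) (phiV h0).
rewrite /Z (phi_zpow M0 (Mpow Gg0) h0 (erefl _)).
rewrite ht (ypowD M0 (Mpow Gg0c)).
rewrite /ypow !mulgA.
set j := absz (t x %% M)%Z.
apply: (@eq_trans _ _ (phi0 kx * (g0 ^+ j * phi0 ky * (g0 ^+ j)^-1) * (g0 * c) ^+ j
   * (g0 * c) ^+ absz (t y %% M)%Z)%g); first by rewrite !mulgA.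
by rewrite (conj_pow j Ky) !mulgA mulgVK.
Qed.
End Phic.

Lemma kpart0 x : t x = 0%R -> kpart x = x.
Proof. by move=> tx; rewrite /kpart tx /= gmulr1. Qed.

Lemma phic_K phi0 c x : t x = 0%R -> phic phi0 c x = phi0 x.
Proof. by move=> tx; rewrite /phic kpart0 // tx /ypow mod0z /= mulg1. Qed.

Lemma phic_u phi0 c : is_hom G phi0 -> phic phi0 c u = (phi0 u * c)%g.
Proof.
move=> h0; rewrite /phic /kpart tu.
have -> : zpow u (- 1%R)%R = ginv u by rewrite zpowN zpow1.
rewrite gmulrV (phi1 h0) mul1g /ypow.
have -> : (1 %% M)%Z = 1%R by rewrite modz_nat modn_small.
by rewrite expg1.
Qed.

Lemma phic_all phi0 phi' : is_hom G phi0 -> is_hom G phi' ->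
  (forall x, t x = 0%R -> phi0 x = phi' x) ->
  ((phi0 u)^-1 * phi' u)%g \in 'C_G(imK phi0) /\
  phi' = phic phi0 ((phi0 u)^-1 * phi' u)%g.
Proof.
move=> h0 h' agr; set c := ((phi0 u)^-1 * phi' u)%g.
have Gc : c \in G by rewrite groupM ?groupV ?(phiG h0) ?(phiG h').
split.
  rewrite inE Gc; apply/centP => y /imKP [k [tk0 <-]].
  have tk1 : t (u ** k ** ginv u) = 0%R.
    by rewrite !ht (tV sT htT) // tk0 tu; lia.
  have := agr _ tk1; rewrite !(phiM h0) !(phiM h') !(phiV h0) !(phiV h') -(agr _ tk0).
  move=> e; rewrite /commute /c.
  apply: (mulgI (phi0 u)); rewrite !mulgA.
  by rewrite mulgV mul1g e mulgVK.
apply: functional_extensionality => x.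
rewrite (phi_split x h') /phic (agr _ (tk x)) /c mulKVg //.
Qed.

Definition Pset : {set {ffun 'I_n -> gT}} := [set s | cb (exists phi, Q phi /\ code phi = s)].
Definition dec (s : {ffun 'I_n -> gT}) : F -> gT :=
  epsilon (inhabits (fun _ : F => 1%g)) (fun phi => Q phi /\ code phi = s).

Lemma decP s : s \in Pset -> Q (dec s) /\ code (dec s) = s.
Proof.
rewrite inE => /cbP ex; rewrite /dec.
exact: (epsilon_spec (inhabits (fun _ : F => 1%g)) (fun phi => Q phi /\ code phi = s) ex).
Qed.

Lemma codeP phi : Q phi -> code phi \in Pset.
Proof. by move=> Qp; rewrite inE; apply/cbP; exists phi. Qed.

Lemma decK phi : Q phi -> dec (code phi) = phi.
Proof.
move=> Qp; have [Qd cd] := decP (codeP Qp).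
by apply: hom_uniq => //; apply: HQhom.
Qed.

Definition cto (s : {ffun 'I_n -> gT}) (a : gT) : {ffun 'I_n -> gT} :=
  [ffun i => (s i ^ a)%g].
Lemma cto1 : cto^~ 1%g =1 id.
Proof. by move=> s; apply/ffunP => i; rewrite ffunE conjg1. Qed.
Lemma ctoM s : act_morph cto s.
Proof. by move=> a b; apply/ffunP => i; rewrite !ffunE conjgM. Qed.
Definition cact := TotalAction cto1 ctoM.

Definition conjphi (phi : F -> gT) (a : gT) := fun x => (phi x ^ a)%g.

Lemma code_conj phi a : code (conjphi phi a) = cto (code phi) a.
Proof. by apply/ffunP => i; rewrite !ffunE. Qed.

Lemma to_P s a : s \in Pset -> a \in N -> cto s a \in Pset.
Proof.
move=> Ps Na; have [Qd cd] := decP Ps.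
by rewrite -cd -code_conj; apply: codeP; apply: HQconj.
Qed.

Lemma dec_to s a : s \in Pset -> a \in N -> dec (cto s a) = conjphi (dec s) a.
Proof.
move=> Ps Na; have [Qd cd] := decP Ps.
by rewrite -{1}cd -code_conj decK //; apply: HQconj.
Qed.

Definition agreeK (f1 f2 : F -> gT) := forall x, t x = 0%R -> f1 x = f2 x.
Definition Eb : rel {ffun 'I_n -> gT} := fun s s' => cb (agreeK (dec s) (dec s')).
Definition cls s := [set y in Pset | Eb s y].
Definition Psi := equivalence_partition Eb Pset.

Lemma Eb_equiv : {in Pset & &, equivalence_rel Eb}.
Proof.
move=> x y z _ _ _; split.
  by apply/cbP.
move=> /cbP exy; apply/idP/idP => /cbP h; apply/cbP => k tk0.
  by rewrite -h // exy.
by rewrite exy // h.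
Qed.

Lemma cls_card s : s \in Pset -> #|cls s| = #|'C_G(imK (dec s))|.
Proof.
move=> Ps; have [Qd cd] := decP Ps; set phi0 := dec s.
have h0 : is_hom G phi0 by apply: HQhom.
have -> : cls s = [set code (phic phi0 c) | c in 'C_G(imK phi0)].
  apply/setP => y; apply/idP/idP.
    rewrite inE => /andP [Py /cbP agr].
    have [Qy cy] := decP Py.
    have [Cc e] := phic_all h0 (HQhom Qy) agr.
    by apply/imsetP; exists ((phi0 u)^-1 * dec y u)%g => //; rewrite -e cy.
  case/imsetP => c Cc ->.
  have hc := phic_hom h0 Cc.
  have Qc : Q (phic phi0 c).
    by apply: (HQloc Qd hc) => x tx; rewrite phic_K.
  rewrite inE codeP //=; apply/cbP => x tx.
  by rewrite decK // phic_K.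
apply: card_in_imset => c1 c2 C1 C2 e.
have := hom_uniq (phic_hom h0 C1) (phic_hom h0 C2) e.
move/(congr1 (fun f => f u)); rewrite !phic_u //.
exact: mulgI.
Qed.

Lemma cls_act s a : s \in Pset -> a \in N -> (cact^* (cls s) a = cls (cto s a))%act.
Proof.
move=> Ps Na; have [Qd cd] := decP Ps.
have Ga : a \in G by apply: (subsetP sNG).
apply/setP => y.
have -> : (cact^* (cls s) a)%act = setact cact (cls s) a by [].
rewrite setactE; apply/idP/idP.
  case/imsetP => x; rewrite inE => /andP [Px /cbP agr] ->.
  rewrite inE to_P //=; apply/cbP => k tk0.
  by rewrite !dec_to // /conjphi agr.
rewrite inE => /andP [Py /cbP agr].
have Nai : a^-1 \in N by rewrite groupV.
apply/imsetP; exists (cto y a^-1); last by rewrite -[cto]/(act cact) actKV.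
rewrite inE to_P //=; apply/cbP => k tk0.
rewrite dec_to // /conjphi -agr //.
by rewrite dec_to // /conjphi conjgK.
Qed.

Lemma stab_sub s : s \in Pset ->
  'C_N[cls s | cact^*]%act \subset 'C_G(imK (dec s)).
Proof.
move=> Ps; apply/subsetP => a; rewrite inE => /andP [Na /astab1P fa].
have Ga : a \in G by apply: (subsetP sNG).
rewrite inE Ga; apply/centP => y /imKP [k [tk0 <-]].
have sX : s \in cls s by rewrite inE Ps; apply/cbP.
have : cto s a \in cls s.
  rewrite -fa.
  have -> : (cact^* (cls s) a)%act = setact cact (cls s) a by [].
  by rewrite setactE; apply/imsetP; exists s.
rewrite inE => /andP [_ /cbP agr].
have := agr _ tk0; rewrite dec_to // /conjphi => e.
by rewrite /commute {1}e conjgE !mulgA mulgV mul1g.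
Qed.

Theorem count_main : exists m, card_eq Q m /\ (#|N| %| m)%N.
Proof.
exists #|Pset|; split.
  exists (List.map dec (enum Pset)); split.
  - by rewrite List.length_map length_size cardE.
  - apply: NoDup_map_in; first exact: enum_uniq.
    move=> s1 s2; rewrite !mem_enum => P1 P2 e.
    by rewrite -(proj2 (decP P1)) -(proj2 (decP P2)) e.
  - move=> f; split.
      move=> Qf; apply/List.in_map_iff; exists (code f); split; first exact: decK.
      by apply/In_mem; rewrite mem_enum; apply: codeP.
    case/List.in_map_iff => s [<- /In_mem]; rewrite mem_enum => Ps.
    exact: (proj1 (decP Ps)).
rewrite (card_partition (equivalence_partitionP Eb_equiv)).
apply: (@orbit_sum_dvd _ _ (cact^*)%act) => //.
- apply/actsP => a Na X.
  have key : forall b X, b \in N -> X \in Psi -> (cact^* X b)%act \in Psi.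
    move=> b X0 Nb /imsetP [s Ps ->].
    rewrite -[[set _ in _ | _]]/(cls s) cls_act //.
    by apply/imsetP; exists (cto s b) => //; apply: to_P.
  apply/idP/idP => [h|]; last exact: key.
  have Nai : a^-1 \in N by rewrite groupV.
  by have := key _ _ Nai h; rewrite actK.
- by move=> X a _; rewrite card_setact.
- move=> X /imsetP [s Ps ->].
  rewrite -[[set _ in _ | _]]/(cls s) cls_card //.
  exact: cardSg (stab_sub Ps).
Qed.
End Count.

Lemma conj_hom (gT : finGroupType) (G : {group gT}) (F : Grp) (phi : F -> gT) a :
  is_hom G phi -> a \in G -> is_hom G (fun x => phi x ^ a)%g.
Proof.
move=> [h1 h2] Ga; split; first by move=> x; rewrite groupJ.
by move=> x y; rewrite h2 conjMg.
Qed.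

Theorem mainTheorem7 (gT : finGroupType) (G A : {group gT}) (F : Grp) (W : F -> Prop) :
  A \subset G ->
  is_subgroup W ->
  @fin_generated F ->
  ~ finite_index (prod_set W (@derived F)) ->
  (exists n, card_eq (fun phi : F -> gT =>
        [/\ is_hom G phi,
            (forall x y, W x -> W y -> phi x = phi y -> x = y) &
            (forall w, W w -> phi w \in A)]) n
      /\ (#|'N_G(A)%g| %| n)%N)
  /\
  (exists n, card_eq (fun phi : F -> gT =>
        [/\ is_hom G phi,
            (forall x y, W x -> W y -> phi x = phi y -> x = y),
            (forall w, W w -> phi w \in A) &
            (forall a, a \in A -> exists2 w, W w & phi w = a)]) n
      /\ (#|'N_G(A)%g| %| n)%N).
Proof.
move=> sAG sW fg nfi.
have [t [u [ht tW tu]]] := exists_t sW fg nfi.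
case: fg => gens hgens.
have sNG : 'N_G(A)%G \subset G by apply: subsetIl.
have NGA a : a \in 'N_G(A)%G -> a \in G /\ a \in 'N(A).
  by rewrite inE => /andP.
split.
- apply: (count_main (N := 'N_G(A)%G) (gens := gens) sNG hgens ht tu).
  + by move=> phi [].
  + move=> phi a [h1 h2 h3] /NGA [Ga Na]; split.
    * exact: conj_hom.
    * by move=> x y Wx Wy /conjg_inj; apply: h2.
    * by move=> w Ww; rewrite memJ_norm // h3.
  + move=> phi phi' [h1 h2 h3] h' agr; split => //.
    * by move=> x y Wx Wy; rewrite -!agr ?tW //; apply: h2.
    * by move=> w Ww; rewrite -agr ?tW //; apply: h3.
- apply: (count_main (N := 'N_G(A)%G) (gens := gens) sNG hgens ht tu).
  + by move=> phi [].
  + move=> phi a [h1 h2 h3 h4] /NGA [Ga Na]; split.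
    * exact: conj_hom.
    * by move=> x y Wx Wy /conjg_inj; apply: h2.
    * by move=> w Ww; rewrite memJ_norm // h3.
    * move=> b Ab; have Ab' : b ^ a^-1 \in A by rewrite memJ_norm ?groupV.
      by have [w Ww e] := h4 _ Ab'; exists w => //; rewrite e conjgKV.
  + move=> phi phi' [h1 h2 h3 h4] h' agr; split => //.
    * by move=> x y Wx Wy; rewrite -!agr ?tW //; apply: h2.
    * by move=> w Ww; rewrite -agr ?tW //; apply: h3.
    * by move=> b Ab; have [w Ww e] := h4 _ Ab; exists w; rewrite // -agr ?tW.
Qed.
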